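(* Suppose that $I$ is an ideal over an uncountable cardinal $\kappa$ such that $\mathcal{P}(\kappa)/I$ is complete. For any cardinal $\lambda$, if $I$ is not $\lambda$-saturated, then $2^\lambda\leq 2^\kappa$. In particular: (a) $I$ is $2^\kappa$-saturated; (b) if $2^\kappa<2^{\kappa^+}$, then $I$ is $\kappa^+$-saturated.
   Context: An ideal over $\kappa$ means a proper, $\kappa$-complete ideal on $\mathcal{P}(\kappa)$ containing all singletons. $\mathcal{P}(\kappa)/I$ is the quotient Boolean algebra of classes $[A]_I=\{B: A\triangle B\in I\}$. $I$ is $\lambda$-saturated if whenever $\{X_\alpha:\alpha<\lambda\}\subseteq\mathcal{P}(\kappa)\setminus I$ there are $\alpha<\beta<\lambda$ with $X_\alpha\cap X_\beta\notin I$. *)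

(* Defs.v *)
(* Cardinals are represented by types; subsets of kappa by
   predicates K -> Prop; cardinal comparison by existence of injections. *)
From Stdlib Require Import Classical.

Definition injective {A B : Type} (f : A -> B) : Prop :=
  forall x y, f x = f y -> x = y.

Definition card_le (A B : Type) : Prop := exists f : A -> B, injective f.
Definition card_lt (A B : Type) : Prop := card_le A B /\ ~ card_le B A.

Definition uncountable (K : Type) : Prop := ~ card_le K nat.

Definition is_succ_card (K Kp : Type) : Prop :=
  card_lt K Kp /\ forall J : Type, card_lt K J -> card_le Kp J.

Definition setK (K : Type) := K -> Prop.
Definition emptyK {K : Type} : setK K := fun _ => False.
Definition fullK {K : Type} : setK K := fun _ => True.
Definition subK {K : Type} (A B : setK K) : Prop := forall x, A x -> B x.
Definition interK {K : Type} (A B : setK K) : setK K := fun x => A x /\ B x.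
Definition unionK {K : Type} (A B : setK K) : setK K := fun x => A x \/ B x.
Definition diffK {K : Type} (A B : setK K) : setK K := fun x => A x /\ ~ B x.

Definition ideal_over (K : Type) (I : setK K -> Prop) : Prop :=
  I emptyK /\
  (forall A B : setK K, subK A B -> I B -> I A) /\
  (forall A B : setK K, I A -> I B -> I (unionK A B)) /\
  (forall (J : Type) (F : J -> setK K), card_lt J K ->
      (forall j, I (F j)) -> I (fun x => exists j, F j x)) /\
  (forall a : K, I (fun x => x = a)) /\
  ~ I fullK.

(* Order on the quotient P(kappa)/I, on representatives:
   [A]_I <= [B]_I  iff  A \ B in I. *)
Definition le_mod {K : Type} (I : setK K -> Prop) (A B : setK K) : Prop :=
  I (diffK A B).

(* P(kappa)/I is a complete Boolean algebra: every subset of the quotient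
   (given by a set S of representatives) has a least upper bound. *)
Definition quotient_complete {K : Type} (I : setK K -> Prop) : Prop :=
  forall S : setK K -> Prop, exists A : setK K,
    (forall B, S B -> le_mod I B A) /\
    (forall C, (forall B, S B -> le_mod I B C) -> le_mod I A C).

Definition saturated {K : Type} (I : setK K -> Prop) (L : Type) : Prop :=
  forall X : L -> setK K, (forall a, ~ I (X a)) ->
    exists a b : L, a <> b /\ ~ I (interK (X a) (X b)).

(* Main.v *)
Require Import Defs.
From Stdlib Require Import Classical ClassicalEpsilon FunctionalExtensionality PropExtensionality.

Lemma cantor (Y : Type) : ~ card_le (Y -> Prop) Y.
Proof.
  intros [f Hf].
  set (D := fun y => exists S, f S = y /\ ~ S y).
  destruct (classic (D (f D))) as [H|H].
  - destruct H as [S [E N]]. apply Hf in E. subst S. exact (N (ex_intro _ D (conj eq_refl N))).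
  - apply H. exists D. split; auto.
Qed.

Lemma key (K : Type) (I : setK K -> Prop) (Hid : ideal_over K I)
  (P : setK K -> Prop) (A Xa : setK K) :
  (forall B, P B -> le_mod I B A) ->
  (forall C, (forall B, P B -> le_mod I B C) -> le_mod I A C) ->
  (forall B, P B -> I (interK Xa B)) ->
  le_mod I Xa A -> I Xa.
Proof.
  destruct Hid as [I0 [Isub [Iun _]]].
  intros Hub Hl Hdis Hle.
  assert (HC : le_mod I A (diffK A Xa)).
  { apply Hl. intros B PB. unfold le_mod.
    apply Isub with (B := unionK (diffK B A) (interK Xa B)).
    - intros x [Bx Nx]. unfold diffK in Nx.
      destruct (classic (A x)) as [Ax|Ax].
      + right. split; [|exact Bx]. destruct (classic (Xa x)); auto. exfalso; auto.
      + left. split; auto.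
    - apply Iun; auto. apply Hub; auto. }
  unfold le_mod in *.
  apply Isub with (B := unionK (diffK Xa A) (diffK A (diffK A Xa))).
  - intros x Xx. destruct (classic (A x)).
    + right. split; auto. intros [_ N]; auto.
    + left. split; auto.
  - apply Iun; auto.
Qed.

Theorem lemma1p1 (K : Type) (I : setK K -> Prop) :
  uncountable K -> ideal_over K I -> quotient_complete I ->
  (forall L : Type, ~ saturated I L -> card_le (L -> Prop) (K -> Prop)) /\
  (* (a) I is 2^kappa-saturated *)
  saturated I (K -> Prop) /\
  (* (b) if 2^kappa < 2^(kappa^+) then I is kappa^+-saturated *)
  (forall Kp : Type, is_succ_card K Kp ->
     card_lt (K -> Prop) (Kp -> Prop) -> saturated I Kp).
Proof.
  intros _ Hid Hc.
  assert (Main : forall L : Type, ~ saturated I L -> card_le (L -> Prop) (K -> Prop)).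
  { intros L Hns.
    apply not_all_ex_not in Hns. destruct Hns as [X HX].
    apply imply_to_and in HX. destruct HX as [Hpos Hanti].
    assert (Hdis : forall a b, a <> b -> I (interK (X a) (X b))).
    { intros a b Hab. apply NNPP. intro N. apply Hanti. exists a, b. auto. }
    set (Sset := fun (S : L -> Prop) (B : setK K) => exists a, S a /\ B = X a).
    exists (fun S => proj1_sig (constructive_indefinite_description _ (Hc (Sset S)))).
    intros S T E.
    destruct (constructive_indefinite_description _ (Hc (Sset S))) as [AS [HS1 HS2]].
    destruct (constructive_indefinite_description _ (Hc (Sset T))) as [AT [HT1 HT2]].
    simpl in E. subst AT.
    assert (Gen : forall (S T : L -> Prop) A,
      (forall B, Sset S B -> le_mod I B A) ->
      (forall B, Sset T B -> le_mod I B A) ->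
      (forall C, (forall B, Sset T B -> le_mod I B C) -> le_mod I A C) ->
      forall a, S a -> T a).
    { intros S' T' A H1 H2 H3 a Sa. apply NNPP. intro Ta.
      apply (Hpos a).
      apply (key K I Hid (Sset T') A (X a) H2 H3).
      - intros B [b [Tb ->]]. apply Hdis. intro; subst; auto.
      - apply H1. exists a; auto. }
    apply functional_extensionality. intro a.
    apply propositional_extensionality. split.
    - apply (Gen S T AS); auto.
    - apply (Gen T S AS); auto. }
  split; [exact Main|]. split.
  - apply NNPP. intro N. apply (cantor (K -> Prop)). apply Main; auto.
  - intros Kp _ [_ Hlt]. apply NNPP. intro N. apply Hlt. apply Main; auto.
Qed.
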